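(* Let $\mathcal{A}$ and $\mathcal{B}$ be Boolean algebras. Then the Fremlin (Archimedean Riesz space) tensor product $\mathcal{C}(\mathcal{A})\bar{\otimes}\mathcal{C}(\mathcal{B})$ is Riesz isomorphic to $\mathcal{C}(\mathcal{A}\otimes\mathcal{B})$, where $\mathcal{A}\otimes\mathcal{B}$ denotes the free product of $\mathcal{A}$ and $\mathcal{B}$.
   Context: Place functions: for a Riesz space $E$ and $e\in E^+$, $x\in E^+$ is a component of $e$ if $x\wedge(e-x)=0$; the set $\mathcal{C}(e)$ of components is a Boolean algebra. For a Boolean algebra $\mathcal{A}$ there is an Archimedean Riesz space $E$ with strong unit $e$ and a Boolean isomorphism $\chi\colon\mathcal{A}\to\mathcal{C}(e)$ such that $E$ is the linear span of $\mathcal{C}(e)$; this is unique up to isomorphism and $E$ is denoted $\mathcal{C}(\mathcal{A})$ (Carathéodory space of place functions). Free product: if $Z_1,Z_2$ are the Stone spaces of $\mathcal{A},\mathcal{B}$ (nonzero ring homomorphisms to $\mathbb{Z}_2$, with $a\mapsto\hat a=\{z: z(a)=1\}$ the Stone representation), then $\mathcal{A}\otimes\mathcal{B}$ is the Boolean algebra of clopen subsets of $Z_1\times Z_2$ (product topology), with canonical Boolean homomorphisms $\epsilon_A(a)=\hat a\times Z_2$, $\epsilon_B(b)=Z_1\times\hat b$. Fremlin tensor product: for Archimedean Riesz spaces $E,F$, $E\bar{\otimes}F$ is the Archimedean Riesz space $G$ together with a Riesz bimorphism $\otimes\colon E\times F\to G$ such that for every Archimedean Riesz space $H$ and Riesz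 bimorphism $\psi\colon E\times F\to H$ there is a unique Riesz homomorphism $T\colon G\to H$ with $T\circ\otimes=\psi$. *)

(* Defs.v *)
From HB Require Import structures.
From mathcomp Require Import all_boot all_order all_algebra.
From mathcomp Require Import reals.
Set Implicit Arguments. Unset Strict Implicit. Unset Printing Implicit Defensive.
Import Order.TTheory GRing.Theory Num.Theory.
Local Open Scope ring_scope.

Record RieszSpace (R : realType) := {
  rcar :> lmodType R;
  rle : rcar -> rcar -> Prop;
  rjoin : rcar -> rcar -> rcar;
  rmeet : rcar -> rcar -> rcar;
  rle_refl : forall x, rle x x;
  rle_trans : forall x y z, rle x y -> rle y z -> rle x z;
  rle_anti : forall x y, rle x y -> rle y x -> x = y;
  rle_add : forall x y z, rle x y -> rle (x + z) (y + z);
  rle_scale : forall (a : R) x y, 0 <= a -> rle x y -> rle (a *: x) (a *: y);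
  rjoin_ub1 : forall x y, rle x (rjoin x y);
  rjoin_ub2 : forall x y, rle y (rjoin x y);
  rjoin_least : forall x y z, rle x z -> rle y z -> rle (rjoin x y) z;
  rmeet_lb1 : forall x y, rle (rmeet x y) x;
  rmeet_lb2 : forall x y, rle (rmeet x y) y;
  rmeet_greatest : forall x y z, rle z x -> rle z y -> rle z (rmeet x y)
}.
Arguments rle {R E} : rename.
Arguments rjoin {R E} : rename.
Arguments rmeet {R E} : rename.

Section Riesz.
Variable R : realType.

Definition rabs (E : RieszSpace R) (x : E) : E := rjoin x (- x).

Definition archimedean (E : RieszSpace R) : Prop :=
  forall x y : E, rle 0 x -> (forall n : nat, rle (x *+ n) y) -> x = 0.

Definition linear_map (E F : RieszSpace R) (T : E -> F) : Prop :=
  forall (a : R) (x y : E), T (a *: x + y) = a *: T x + T y.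

Definition riesz_hom (E F : RieszSpace R) (T : E -> F) : Prop :=
  linear_map T /\ forall x y : E, T (rjoin x y) = rjoin (T x) (T y).

Definition riesz_iso (E F : RieszSpace R) (T : E -> F) : Prop :=
  riesz_hom T /\ bijective T.

Definition riesz_bimorphism (E F G : RieszSpace R) (psi : E -> F -> G) : Prop :=
  [/\ forall x : E, linear_map (psi x),
      forall y : F, linear_map (fun x => psi x y),
      forall x : E, rle 0 x -> riesz_hom (psi x)
    & forall y : F, rle 0 y -> riesz_hom (fun x => psi x y)].

Definition fremlin_tensor_product (E F G : RieszSpace R) (tp : E -> F -> G) : Prop :=
  [/\ archimedean G, riesz_bimorphism tp &
      forall (H : RieszSpace R) (psi : E -> F -> H),
        archimedean H -> riesz_bimorphism psi ->
        exists! T : G -> H, riesz_hom T /\ forall x y, T (tp x y) = psi x y].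

Definition component (E : RieszSpace R) (e x : E) : Prop :=
  rle 0 x /\ rmeet x (e - x) = 0.

Definition strong_unit (E : RieszSpace R) (e : E) : Prop :=
  rle 0 e /\ forall x : E, exists n : nat, rle (rabs x) (e *+ n).

Definition spanned_by_components (E : RieszSpace R) (e : E) : Prop :=
  forall x : E, exists s : seq (R * E),
    (forall i, (i < size s)%N -> component e (nth (0, 0) s i).2) /\
    x = \sum_(p <- s) p.1 *: p.2.

(* Generic Boolean algebra given by its carrier predicate [dom] in a type T
   and its operations.  [chi] is a Boolean isomorphism from it onto the
   Boolean algebra C(e) (operations: meet, join, e - x, 0, e). *)
Definition boolean_iso_onto_components (T : Type) (dom : T -> Prop)
    (meetT joinT : T -> T -> T) (complT : T -> T) (botT topT : T)
    (E : RieszSpace R) (e : E) (chi : T -> E) : Prop :=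
  [/\ forall a, dom a -> component e (chi a),
      forall x, component e x -> exists2 a, dom a & chi a = x &
      forall a b, dom a -> dom b -> chi a = chi b -> a = b] /\
  [/\ forall a b, dom a -> dom b -> chi (meetT a b) = rmeet (chi a) (chi b),
      forall a b, dom a -> dom b -> chi (joinT a b) = rjoin (chi a) (chi b),
      forall a, dom a -> chi (complT a) = e - chi a &
      chi botT = 0 /\ chi topT = e].

(* (E, e, chi) is a realization of the Caratheodory space C(A) of place
   functions for the Boolean algebra given by (dom, operations). *)
Definition caratheodory_space_gen (T : Type) (dom : T -> Prop)
    (meetT joinT : T -> T -> T) (complT : T -> T) (botT topT : T)
    (E : RieszSpace R) (e : E) (chi : T -> E) : Prop :=
  [/\ archimedean E, strong_unit e,
      boolean_iso_onto_components dom meetT joinT complT botT topT e chi &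
      spanned_by_components e].

Definition caratheodory_space (d : Order.disp_t) (A : ctbDistrLatticeType d)
    (E : RieszSpace R) (e : E) (chi : A -> E) : Prop :=
  caratheodory_space_gen (fun _ : A => True) Order.meet Order.join Order.compl
    Order.bottom Order.top e chi.

End Riesz.

Section Stone.
Variables (d : Order.disp_t) (A : ctbDistrLatticeType d).

(* symmetric difference = Boolean-ring addition *)
Definition symdiff (a b : A) : A := Order.join (Order.diff a b) (Order.diff b a).

(* nonzero ring homomorphisms from the Boolean ring A to Z_2 *)
Definition stone_point (z : A -> bool) : Prop :=
  [/\ forall a b, z (symdiff a b) = xorb (z a) (z b),
      forall a b, z (Order.meet a b) = z a && z b &
      exists a, z a].

Definition stone_space := {z : A -> bool | stone_point z}.

Definition stone_hat (a : A) : stone_space -> Prop := fun z => proj1_sig z a.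
End Stone.

Section FreeProduct.
Variables (dA dB : Order.disp_t) (A : ctbDistrLatticeType dA)
          (B : ctbDistrLatticeType dB).

Definition Z12 := (stone_space A * stone_space B)%type.

Definition prod_open (U : Z12 -> Prop) : Prop :=
  forall p, U p -> exists (a : A) (b : B),
    [/\ stone_hat a p.1, stone_hat b p.2 &
        forall q, stone_hat a q.1 -> stone_hat b q.2 -> U q].

Definition prod_clopen (U : Z12 -> Prop) : Prop :=
  prod_open U /\ prod_open (fun p => ~ U p).

(* The free product A (x) B: Boolean algebra of clopen subsets of Z1 x Z2 *)
Definition caratheodory_space_free_product (R : realType)
    (E : RieszSpace R) (e : E) (chi : (Z12 -> Prop) -> E) : Prop :=
  caratheodory_space_gen prod_clopen
    (fun U V p => U p /\ V p) (fun U V p => U p \/ V p)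
    (fun U p => ~ U p) (fun _ => False) (fun _ => True) e chi.
End FreeProduct.

(* Main.v *)
Require Import Defs.
From HB Require Import structures.
From mathcomp Require Import all_boot all_order all_algebra.
From mathcomp Require Import reals.
From mathcomp Require Import boolp classical_sets.
From mathcomp Require Import lra.
Set Implicit Arguments. Unset Strict Implicit. Unset Printing Implicit Defensive.

Module Part1.
Import Order.TTheory GRing.Theory Num.Theory.
Local Open Scope ring_scope.

Section RieszLemmas.
Variable R : realType.
Variable E : RieszSpace R.
Implicit Types x y z u v w : E.

Local Notation le := (@rle R E).

Lemma rle_addl x y z : le x y -> le (z + x) (z + y).
Proof. by move=> h; rewrite ![z + _]addrC; apply: rle_add. Qed.

Lemma rle_sub x y z : le x y -> le (x - z) (y - z).
Proof. exact: rle_add. Qed.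

Lemma rle_opp x y : le x y -> le (- y) (- x).
Proof.
move=> h; have := rle_add (- x - y) h.
by rewrite addrA subrr add0r addrCA subrr addr0.
Qed.

Lemma rle_subr x y : le x y -> le 0 (y - x).
Proof. by move=> h; have := rle_sub x h; rewrite subrr. Qed.

Lemma rle_subl x y : le 0 (y - x) -> le x y.
Proof. by move=> h; have := rle_add x h; rewrite add0r subrK. Qed.

Lemma rjoin_addr x y z : rjoin (x + z) (y + z) = rjoin x y + z.
Proof.
apply: rle_anti.
  by apply: rjoin_least; apply: rle_add; [apply: rjoin_ub1|apply: rjoin_ub2].
set J := rjoin (x + z) (y + z).
have h : le (rjoin x y) (J - z).
  apply: rjoin_least.
    by rewrite -(addrK z x); apply: rle_sub; apply: rjoin_ub1.
  by rewrite -(addrK z y); apply: rle_sub; apply: rjoin_ub2.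
by have := rle_add z h; rewrite subrK.
Qed.

Lemma rmeet_addr x y z : rmeet (x + z) (y + z) = rmeet x y + z.
Proof.
apply: rle_anti; last first.
  by apply: rmeet_greatest; apply: rle_add; [apply: rmeet_lb1|apply: rmeet_lb2].
set J := rmeet (x + z) (y + z).
have h : le (J - z) (rmeet x y).
  apply: rmeet_greatest.
    by rewrite -(addrK z x); apply: rle_sub; apply: rmeet_lb1.
  by rewrite -(addrK z y); apply: rle_sub; apply: rmeet_lb2.
by have := rle_add z h; rewrite subrK.
Qed.

Lemma rjoin_addl x y z : rjoin (z + x) (z + y) = z + rjoin x y.
Proof. by rewrite ![z + _]addrC rjoin_addr. Qed.

Lemma rmeet_addl x y z : rmeet (z + x) (z + y) = z + rmeet x y.
Proof. by rewrite ![z + _]addrC rmeet_addr. Qed.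

Lemma rjoinC x y : rjoin x y = rjoin y x.
Proof. by apply: rle_anti; apply: rjoin_least; [apply: rjoin_ub2|apply: rjoin_ub1|apply: rjoin_ub2|apply: rjoin_ub1]. Qed.

Lemma rmeetC x y : rmeet x y = rmeet y x.
Proof. by apply: rle_anti; apply: rmeet_greatest; [apply: rmeet_lb2|apply: rmeet_lb1|apply: rmeet_lb2|apply: rmeet_lb1]. Qed.

Lemma ropp_join x y : - rjoin x y = rmeet (- x) (- y).
Proof.
apply: rle_anti.
  by apply: rmeet_greatest; apply: rle_opp; [apply: rjoin_ub1|apply: rjoin_ub2].
rewrite -[rmeet _ _]opprK; apply: rle_opp; apply: rjoin_least.
  by have := rle_opp (rmeet_lb1 (- x) (- y)); rewrite opprK.
by have := rle_opp (rmeet_lb2 (- x) (- y)); rewrite opprK.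
Qed.

Lemma rjoin_meet x y : rjoin x y + rmeet x y = x + y.
Proof.
have -> : rmeet x y = x + y - rjoin x y.
  rewrite ropp_join -rmeet_addl.
  have -> : x + y + - x = y by rewrite addrC addrA addNr add0r.
  have -> : x + y + - y = x by rewrite addrK.
  by rewrite rmeetC.
by rewrite addrC subrK.
Qed.

Lemma rjoin_eq x y : le x y -> rjoin x y = y.
Proof. by move=> h; apply: rle_anti; [apply: rjoin_least => //; apply: rle_refl|apply: rjoin_ub2]. Qed.

Lemma rmeet_eq x y : le x y -> rmeet x y = x.
Proof. by move=> h; apply: rle_anti; [apply: rmeet_lb1|apply: rmeet_greatest => //; apply: rle_refl]. Qed.

Lemma rmeet_le x y x' y' : le x x' -> le y y' -> le (rmeet x y) (rmeet x' y').
Proof.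
move=> h1 h2; apply: rmeet_greatest.
  by apply: rle_trans h1; apply: rmeet_lb1.
by apply: rle_trans h2; apply: rmeet_lb2.
Qed.

Lemma rle_addpos x y : le 0 y -> le x (x + y).
Proof. by move=> h; have := rle_addl x h; rewrite addr0. Qed.

Lemma rle_pos_add x y : le 0 x -> le 0 y -> le 0 (x + y).
Proof. by move=> hx hy; apply: rle_trans hx _; apply: rle_addpos. Qed.

Lemma rmeet_subadd x y z : le 0 x -> le 0 y -> le 0 z ->
  le (rmeet (x + y) z) (rmeet x z + rmeet y z).
Proof.
move=> hx hy hz.
rewrite -rmeet_addr -!rmeet_addl.
apply: rmeet_greatest; apply: rmeet_greatest.
- exact: rmeet_lb1.
- by apply: rle_trans (rmeet_lb2 _ _) _; rewrite addrC; apply: rle_addpos.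
- by apply: rle_trans (rmeet_lb2 _ _) _; apply: rle_addpos.
- by apply: rle_trans (rmeet_lb2 _ _) _; apply: rle_addpos.
Qed.

Lemma rmeet0_pos x : le 0 x -> rmeet 0 x = 0.
Proof. by move=> h; apply: rmeet_eq. Qed.

Lemma rmeet_pos x y : le 0 x -> le 0 y -> le 0 (rmeet x y).
Proof. by move=> hx hy; apply: rmeet_greatest. Qed.

Lemma disj_add x y z : le 0 x -> le 0 y -> le 0 z ->
  rmeet x z = 0 -> rmeet y z = 0 -> rmeet (x + y) z = 0.
Proof.
move=> hx hy hz h1 h2; apply: rle_anti; last first.
  by apply: rmeet_pos => //; apply: rle_pos_add.
by have := rmeet_subadd hx hy hz; rewrite h1 h2 addr0.
Qed.

Lemma rle_scale_pos (a : R) x : 0 <= a -> le 0 x -> le 0 (a *: x).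
Proof. by move=> ha hx; have := rle_scale ha hx; rewrite scaler0. Qed.

Lemma disj_natmul x z n : le 0 x -> le 0 z -> rmeet x z = 0 -> rmeet (x *+ n) z = 0.
Proof.
move=> hx hz h; elim: n => [|n IH]; first by rewrite mulr0n rmeet0_pos.
rewrite mulrS; apply: disj_add => //.
elim: n {IH} => [|n IH]; first by rewrite mulr0n; apply: rle_refl.
by rewrite mulrS; apply: rle_pos_add.
Qed.

Lemma disj_scale_l (a : R) x z : 0 <= a -> le 0 x -> le 0 z -> rmeet x z = 0 ->
  rmeet (a *: x) z = 0.
Proof.
move=> ha hx hz h.
have [n hn] : exists n : nat, a <= n%:R.
  by exists (Num.bound a); apply: ltW; apply: archi_boundP.
apply: rle_anti; last by apply: rmeet_pos => //; apply: rle_scale_pos.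
rewrite -(disj_natmul n hx hz h); apply: rmeet_le; last exact: rle_refl.
rewrite -scaler_nat; apply: rle_subl; rewrite -scalerBl.
by apply: rle_scale_pos => //; rewrite subr_ge0.
Qed.


Lemma disj_scale (a b : R) x z : 0 <= a -> 0 <= b -> le 0 x -> le 0 z -> rmeet x z = 0 ->
  rmeet (a *: x) (b *: z) = 0.
Proof.
move=> ha hb hx hz h.
have h1 := disj_scale_l ha hx hz h.
rewrite rmeetC; apply: disj_scale_l => //; first exact: rle_scale_pos.
by rewrite rmeetC.
Qed.

Lemma rmeetxx x : rmeet x x = x.
Proof. by apply: rmeet_eq; apply: rle_refl. Qed.

Lemma sum_pos (I : finType) (F : I -> E) : (forall i, le 0 (F i)) -> le 0 (\sum_i F i).
Proof.
move=> h; apply: (big_ind (fun s => le 0 s)) => //; first exact: rle_refl.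
by move=> ? ? ? ?; apply: rle_pos_add.
Qed.

Lemma disj_sum_l (I : finType) (F : I -> E) X : le 0 X -> (forall i, le 0 (F i)) ->
  (forall i, rmeet (F i) X = 0) -> rmeet (\sum_i F i) X = 0.
Proof.
move=> hX hF h.
suff: le 0 (\sum_i F i) /\ rmeet (\sum_i F i) X = 0 by case.
apply: (big_ind (fun s => le 0 s /\ rmeet s X = 0)).
- by split; [apply: rle_refl | apply: rmeet0_pos].
- by move=> s t [hs1 hs2] [ht1 ht2]; split; [apply: rle_pos_add | apply: disj_add].
- by move=> i _; split.
Qed.

Section Fam.
Variables (I : finType) (u : I -> E).
Hypothesis hu : forall i, le 0 (u i).
Hypothesis hd : forall i j, i != j -> rmeet (u i) (u j) = 0.

Lemma sum_scale_pos (c : I -> R) : (forall i, 0 <= c i) -> le 0 (\sum_i c i *: u i).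
Proof. by move=> hc; apply: sum_pos => i; apply: rle_scale_pos. Qed.

Lemma disj_sums (c d : I -> R) : (forall i, 0 <= c i) -> (forall i, 0 <= d i) ->
  (forall i, c i = 0 \/ d i = 0) ->
  rmeet (\sum_i c i *: u i) (\sum_i d i *: u i) = 0.
Proof.
move=> hc hd' h0.
apply: disj_sum_l; first exact: sum_scale_pos.
  by move=> i; apply: rle_scale_pos.
move=> i; rewrite rmeetC; apply: disj_sum_l.
- exact: rle_scale_pos.
- by move=> j; apply: rle_scale_pos.
move=> j; have [->|nij] := eqVneq j i.
  case: (h0 i) => ->; rewrite scale0r.
    by rewrite rmeetC rmeet0_pos //; apply: rle_scale_pos.
  by rewrite rmeet0_pos //; apply: rle_scale_pos.
by apply: disj_scale => //; apply: hd.
Qed.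

Lemma max_decomp (r : R) : Num.max r 0 - Num.max (- r) 0 = r.
Proof.
by case: leP => h; case: leP => h'; lra.
Qed.

Lemma sum_term_le (c : I -> R) i : (forall j, 0 <= c j) ->
  le (c i *: u i) (\sum_j c j *: u j).
Proof.
move=> hc; rewrite (bigD1 i) //=; apply: rle_addpos.
apply: (big_ind (fun s => le 0 s)); first exact: rle_refl.
  by move=> ? ? ? ?; apply: rle_pos_add.
by move=> j _; apply: rle_scale_pos.
Qed.

Lemma disj_zero (c : I -> R) : \sum_i c i *: u i = 0 -> forall i, c i = 0 \/ u i = 0.
Proof.
move=> h0 i.
pose p j := Num.max (c j) 0; pose n j := Num.max (- c j) 0.
have hp j : 0 <= p j by rewrite /p le_max lexx orbT.
have hn j : 0 <= n j by rewrite /n le_max lexx orbT.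
have hpn j : p j = 0 \/ n j = 0.
  rewrite /p /n; case: leP => h; case: leP => h'; try by [left|right].
  lra.
have eP : \sum_j p j *: u j = \sum_j n j *: u j.
  apply/eqP; rewrite -subr_eq0 -sumrB; apply/eqP.
  rewrite -[RHS]h0; apply: eq_bigr => j _.
  by rewrite -scalerBl /p /n max_decomp.
have hm := disj_sums hp hn hpn.
rewrite -eP rmeetxx in hm.
have hP : p i *: u i = 0.
  apply: rle_anti; last exact: rle_scale_pos.
  by rewrite -hm; apply: sum_term_le.
have hN : n i *: u i = 0.
  apply: rle_anti; last exact: rle_scale_pos.
  by rewrite -hm eP; apply: sum_term_le.
have hc : c i *: u i = 0 by rewrite -(max_decomp (c i)) scalerBl hP hN subrr.
have [->|nz] := eqVneq (c i) 0; first by left.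
by right; rewrite -[u i]scale1r -(mulVf nz) -scalerA hc scaler0.
Qed.

Lemma disj_join (c d : I -> R) :
  rjoin (\sum_i c i *: u i) (\sum_i d i *: u i) = \sum_i Num.max (c i) (d i) *: u i.
Proof.
set s := \sum_i c i *: u i; set t := \sum_i d i *: u i.
set m := \sum_i Num.max (c i) (d i) *: u i.
have e1 : m - s = \sum_i (Num.max (c i) (d i) - c i) *: u i.
  by rewrite /m /s -sumrB; apply: eq_bigr => i _; rewrite scalerBl.
have e2 : m - t = \sum_i (Num.max (c i) (d i) - d i) *: u i.
  by rewrite /m /t -sumrB; apply: eq_bigr => i _; rewrite scalerBl.
have h : rmeet (m - s) (m - t) = 0.
  rewrite e1 e2; apply: disj_sums.
  - by move=> i; rewrite subr_ge0 le_max lexx.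
  - by move=> i; rewrite subr_ge0 le_max lexx orbT.
  - by move=> i; case: leP => h; [right|left]; rewrite subrr.
have : m - rjoin s t = 0 by rewrite ropp_join -rmeet_addl.
by move/eqP; rewrite subr_eq0 => /eqP.
Qed.

Lemma disj_pos (c : I -> R) : le 0 (\sum_i c i *: u i) -> forall i, 0 <= c i \/ u i = 0.
Proof.
move=> hx i.
have h1 : rjoin (\sum_i (- c i) *: u i) (\sum_i 0 *: u i) = 0.
  have -> : \sum_i 0 *: u i = 0 by rewrite big1 // => j _; rewrite scale0r.
  have -> : \sum_i (- c i) *: u i = - \sum_i c i *: u i.
    by rewrite -sumrN; apply: eq_bigr => j _; rewrite scaleNr.
  apply: rjoin_eq.
  by have := rle_opp hx; rewrite oppr0.
rewrite disj_join in h1.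
case: (disj_zero h1 i) => [h|->]; last by right.
left; move/eqP: h; rewrite eq_le ge_max => /andP[/andP[h _] _].
by rewrite -oppr_le0.
Qed.

End Fam.

End RieszLemmas.

End Part1.
Import Part1.

Module Part2.
Import Order.Theory GRing.Theory Num.Theory.
Local Open Scope ring_scope.

Section Lin.
Variable R : realType.
Definition lin (U V : lmodType R) (T : U -> V) :=
  forall (a : R) (x y : U), T (a *: x + y) = a *: T x + T y.

Variables (U V : lmodType R) (T : U -> V).
Hypothesis hT : lin T.

Lemma lin0 : T 0 = 0.
Proof.
have := hT 1 0 0; rewrite scaler0 addr0 scale1r => e.
by apply: (addrI (T 0)); rewrite addr0 -e.
Qed.
Lemma linD x y : T (x + y) = T x + T y.
Proof. by have := hT 1 x y; rewrite !scale1r. Qed.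
Lemma linZ a x : T (a *: x) = a *: T x.
Proof. by have := hT a x 0; rewrite !addr0 lin0 addr0. Qed.
Lemma linN x : T (- x) = - T x.
Proof. by rewrite -scaleN1r linZ scaleN1r. Qed.
Lemma linB x y : T (x - y) = T x - T y.
Proof. by rewrite linD linN. Qed.
Lemma lin_sum (I : Type) (s : seq I) (P : pred I) (F : I -> U) :
  T (\sum_(i <- s | P i) F i) = \sum_(i <- s | P i) T (F i).
Proof.
elim: s => [|i s IH]; first by rewrite !big_nil lin0.
by rewrite !big_cons; case: (P i); rewrite ?linD IH.
Qed.
End Lin.

Lemma lin_comp (R : realType) (U V W : lmodType R) (S : U -> V) (T : V -> W) :
  lin S -> lin T -> lin (T \o S).
Proof. by move=> hS hT a x y /=; rewrite hS hT. Qed.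

Section RH.
Variable R : realType.
Variables (E F : RieszSpace R) (T : E -> F).
Hypothesis hT : riesz_hom T.

Lemma rh_lin : lin T. Proof. by case: hT. Qed.

Lemma rh_meet x y : T (rmeet x y) = rmeet (T x) (T y).
Proof.
have e : forall (G : RieszSpace R) (a b : G), rmeet a b = a + b - rjoin a b.
  by move=> G a b; rewrite -[a + b](rjoin_meet a b) addrAC subrr add0r.
by rewrite !e linB ?linD; [rewrite hT.2 | exact: rh_lin..].
Qed.

Lemma rh_pos x : rle 0 x -> rle 0 (T x).
Proof.
move=> h; have -> : x = rjoin x 0 by rewrite rjoinC rjoin_eq.
rewrite hT.2 (lin0 rh_lin); exact: rjoin_ub2.
Qed.
End RH.

Lemma rh_comp (R : realType) (E F G : RieszSpace R) (S : E -> F) (T : F -> G) :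
  riesz_hom S -> riesz_hom T -> riesz_hom (T \o S).
Proof.
move=> hS hT; split; first exact: lin_comp (rh_lin hS) (rh_lin hT).
by move=> x y /=; rewrite hS.2 hT.2.
Qed.

Lemma rh_id (R : realType) (E : RieszSpace R) : riesz_hom (@id E).
Proof. by split. Qed.

Section Atoms.
Variables (d : Order.disp_t) (A : ctbDistrLatticeType d).
Local Open Scope order_scope.
Implicit Types a b t x y : A.

Fixpoint atoms (L : seq A) : seq A :=
  if L is a :: L' then [seq t `&` a | t <- atoms L'] ++ [seq t `&` ~` a | t <- atoms L']
  else [:: \top].

Definition disjr x y := x `&` y == \bot.

Lemma atoms_pairwise L : pairwise disjr (atoms L).
Proof.
elim: L => [|a L IH] //=.
rewrite pairwise_cat !pairwise_map; apply/and3P; split.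
- rewrite allrel_mapl allrel_mapr; apply/allrelP => x y _ _.
  by rewrite /disjr meetACA meetxC meetx0.
- apply: sub_pairwise IH => x y; rewrite /relpre /disjr /=; rewrite meetACA meetxx => /eqP ->.
  by rewrite meet0x.
- apply: sub_pairwise IH => x y; rewrite /relpre /disjr /= meetACA meetxx => /eqP ->.
  by rewrite meet0x.
Qed.

Lemma atoms_disj L (i j : 'I_(size (atoms L))) : i != j ->
  nth \bot (atoms L) i `&` nth \bot (atoms L) j = \bot.
Proof.
move=> nij; have P := atoms_pairwise L; move/(pairwiseP \bot): P => P.
have [lt|gt|eq] := ltngtP i j.
- by apply/eqP; apply: P => //; apply: ltn_ord.
- by rewrite meetC; apply/eqP; apply: P => //; apply: ltn_ord.
- by move: nij; rewrite -val_eqE /= eq eqxx.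
Qed.

Lemma atoms_cut L a t : a \in L -> t \in atoms L -> t `&` a = t \/ t `&` a = \bot.
Proof.
elim: L t => [|b L IH] t //=; rewrite inE mem_cat => /orP[/eqP ->|aL] /orP[] /mapP[s sL ->].
- by left; rewrite -meetA meetxx.
- by right; rewrite -meetA meetCx meetx0.
- by case: (IH _ aL sL) => e; [left|right]; rewrite meetAC e // meet0x.
- by case: (IH _ aL sL) => e; [left|right]; rewrite meetAC e // meet0x.
Qed.

Definition additive_on (V : zmodType) (f : A -> V) :=
  forall a b, a `&` b = \bot -> f (a `|` b) = (f a + f b)%R.

Lemma additive0 (V : zmodType) (f : A -> V) : additive_on f -> f \bot = 0%R.
Proof.
move=> h; have := h _ _ (meetxx \bot); rewrite joinxx => e.
by apply: (addrI (f \bot)); rewrite addr0 -e.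
Qed.

Lemma additive_split (V : zmodType) (f : A -> V) : additive_on f ->
  forall x a, f x = (f (x `&` a) + f (x `&` ~` a))%R.
Proof.
move=> h x a; rewrite -h; first by rewrite -meetUr joinxC meetx1.
by rewrite meetACA meetxx meetxC meetx0.
Qed.

Lemma decomp (V : zmodType) (f : A -> V) : additive_on f ->
  forall L x, f x = (\sum_(t <- atoms L) f (x `&` t))%R.
Proof.
move=> h; elim=> [|a L IH] x /=; first by rewrite big_seq1 meetx1.
rewrite big_cat !big_map /= IH -big_split /=; apply: eq_bigr => t _.
by rewrite !meetA -additive_split.
Qed.

End Atoms.

End Part2.
Import Part2.

Module Part3.
Import Order.Theory.

Section Stone.
Variables (d : Order.disp_t) (A : ctbDistrLatticeType d).
Local Open Scope order_scope.
Implicit Types a b x y : A.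

Section Point.
Variable z : A -> bool.
Hypothesis hz : stone_point z.

Lemma sp_meet a b : z (a `&` b) = z a && z b.
Proof. by case: hz. Qed.

Lemma sp_bot : z \bot = false.
Proof.
case: hz => hs _ [a _]; have := hs a a.
by rewrite /symdiff diffxx joinxx; case: (z a).
Qed.

Lemma sp_top : z \top = true.
Proof. by case: hz => _ hm [a za]; move: za; rewrite -[a]meetx1 hm => /andP[]. Qed.

Lemma sp_compl a : z (~` a) = ~~ z a.
Proof.
case: hz => hs _ _; have := hs \top a.
by rewrite /symdiff !diffE meet1x compl1 meetx0 joinx0 sp_top.
Qed.

Lemma sp_join a b : z (a `|` b) = z a || z b.
Proof.
by rewrite -[a `|` b]complK complU sp_compl sp_meet !sp_compl negb_and !negbK.
Qed.

Lemma sp_meets (s : seq A) : z (\meet_(x <- s) x) = all z s.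
Proof.
by elim: s => [|x s IH]; rewrite ?big_nil ?sp_top // big_cons sp_meet IH.
Qed.
End Point.

Lemma spP (p : stone_space A) : stone_point (proj1_sig p).
Proof. exact: proj2_sig p. Qed.

Section UF.
Variable Q : A -> Prop.
Hypothesis fip : forall s : seq A, (forall x, x \in s -> Q x) -> \meet_(x <- s) x != \bot.

Let F0 x := exists s : seq A, (forall y, y \in s -> Q y) /\ \meet_(y <- s) y <= x.
Let Filt (X : A -> Prop) := [/\ forall x y, X x -> X y -> X (x `&` y),
   forall x y, X x -> x <= y -> X y & ~ X \bot].
Let PP (X : set A) := Filt (fun x => F0 x \/ X x).

Let F0meet x y : F0 x -> F0 y -> F0 (x `&` y).
Proof.
move=> [s [hs1 hs2]] [t [ht1 ht2]]; exists (s ++ t); split.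
  by move=> w; rewrite mem_cat => /orP[]; [apply: hs1|apply: ht1].
by rewrite big_cat /=; apply: leI2.
Qed.

Let F0up x y : F0 x -> x <= y -> F0 y.
Proof. by move=> [s [hs1 hs2]] h; exists s; split => //; apply: le_trans h. Qed.

Let F0bot : ~ F0 \bot.
Proof.
move=> [s [hs1 hs2]]; have := fip hs1; rewrite lex0 in hs2.
by rewrite (eqP hs2) eqxx.
Qed.

Let F0top : F0 \top.
Proof. by exists [::]; split => //; rewrite big_nil. Qed.

Lemma ultrafilter_exists : exists p : stone_space A, forall x, Q x -> proj1_sig p x.
Proof.
have chainP : forall F : set (set A), subset F PP -> total_on F subset ->
    PP (bigcup F id).
  move=> F FP Ftot; split.
  - move=> x y [hx|[X FX Xx]] [hy|[Y FY Yy]].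
    + by left; apply: F0meet.
    + have [h1 h2 h3] := FP _ FY.
      by case: (h1 x y (or_introl hx) (or_intror Yy)) => [?|?]; [left|right; exists Y].
    + have [h1 h2 h3] := FP _ FX.
      by case: (h1 x y (or_intror Xx) (or_introl hy)) => [?|?]; [left|right; exists X].
    + case: (Ftot _ _ FX FY) => sub.
        have [h1 h2 h3] := FP _ FY.
        by case: (h1 x y (or_intror (sub _ Xx)) (or_intror Yy)) => [?|?]; [left|right; exists Y].
      have [h1 h2 h3] := FP _ FX.
      by case: (h1 x y (or_intror Xx) (or_intror (sub _ Yy))) => [?|?]; [left|right; exists X].
  - move=> x y [hx|[X FX Xx]] le.
      by left; apply: F0up le.
    have [h1 h2 h3] := FP _ FX.
    by case: (h2 x y (or_intror Xx) le) => [?|?]; [left|right; exists X].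
  - move=> [h|[X FX Xb]]; first exact: F0bot h.
    by have [h1 h2 h3] := FP _ FX; apply: h3; right.
have [A0 [PA0 maxA0]] := Zorn_bigcup chainP.
pose Fm x := F0 x \/ A0 x.
have [Fmeet Fup Fbot] : Filt Fm by exact: PA0.
have Ftop : Fm \top by left.
have ultra : forall a, Fm a \/ Fm (~` a).
  move=> a; case: (pselect (Fm a)) => [h|na]; first by left.
  pose B x := exists f, Fm f /\ f `&` a <= x.
  case: (pselect (B \bot)) => [[f [hf le]]|nB].
    right; apply: Fup hf _; rewrite -disj_leC; move: le; rewrite lex0 => ->.
    by [].
  exfalso; apply: (maxA0 B).
    split; first by move=> x hx; exists x; split; [right|rewrite leIl].
    move=> sub; apply: na; right; apply: sub; exists \top; split => //.
    by rewrite meet1x.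
  split.
  - have toB : forall x, F0 x \/ B x -> B x.
      by move=> x [hx|//]; exists x; split; [left|rewrite leIl].
    move=> x y /toB [f [hf lef]] /toB [g [hg leg]]; right.
    exists (f `&` g); split; first exact: Fmeet.
    by rewrite lexI; apply/andP; split; [apply: le_trans lef; rewrite leI2 // leIl|
      apply: le_trans leg; rewrite leI2 // leIr].
  - move=> x y [hx|[f [hf lef]]] le.
      by left; apply: F0up le.
    by right; exists f; split => //; apply: le_trans le.
  - by move=> [h|h]; [apply: F0bot|apply: nB].
pose zz x := `[< Fm x >].
have excl : forall a, Fm a -> Fm (~` a) -> False.
  by move=> a h1 h2; apply: Fbot; rewrite -(meetxC a); apply: Fmeet.
have zmeet : forall a b, zz (a `&` b) = zz a && zz b.
  move=> a b; apply/asboolP/andP.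
    by move=> h; split; apply/asboolP; apply: Fup h _; rewrite ?leIl ?leIr.
  by move=> [/asboolP ha /asboolP hb]; apply: Fmeet.
have zcompl : forall a, zz (~` a) = ~~ zz a.
  move=> a; case: (ultra a) => h.
    rewrite /zz (asboolT h); apply/asboolP => h'; exact: excl h h'.
  rewrite /zz (asboolT h); symmetry; apply/negP => /asboolP h'; exact: excl h' h.
have zjoin : forall a b, zz (a `|` b) = zz a || zz b.
  move=> a b; rewrite -[a `|` b]complK complU zcompl zmeet !zcompl.
  by rewrite negb_and !negbK.
have hzz : stone_point zz.
  split => //; last by exists \top; apply/asboolP.
  move=> a b; rewrite /symdiff zjoin !diffE !zmeet !zcompl.
  by case: (zz a); case: (zz b).
exists (exist _ zz hzz) => x qx /=; apply/asboolP; left.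
by exists [:: x]; split; [move=> y; rewrite inE => /eqP ->|rewrite big_seq1].
Qed.
End UF.

Lemma stone_point_exists a : a != \bot -> exists p : stone_space A, proj1_sig p a.
Proof.
move=> na.
have fip : forall s : seq A, (forall x, x \in s -> x = a) -> \meet_(x <- s) x != \bot.
  move=> s hs; apply: contra na => /eqP e.
  rewrite -lex0 -e; apply/meetsP_seq => x xs _.
  by rewrite (hs x xs).
have [p hp] := ultrafilter_exists fip.
by exists p; apply: hp.
Qed.

Lemma stone_compact (P : A -> Prop) :
  (forall p : stone_space A, exists a, P a /\ proj1_sig p a) ->
  exists s : seq A, (forall a, a \in s -> P a) /\
    forall p : stone_space A, exists2 a, a \in s & proj1_sig p a.
Proof.
move=> cov; case: (pselect (exists s : seq A, (forall a, a \in s -> P a) /\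
    forall p : stone_space A, exists2 a, a \in s & proj1_sig p a)) => // ns.
exfalso.
have fip : forall s : seq A, (forall x, x \in s -> P (~` x)) -> \meet_(x <- s) x != \bot.
  move=> s hs; apply/negP => /eqP e; apply: ns.
  exists (map Order.compl s); split.
    by move=> a /mapP[x xs ->]; apply: hs.
  move=> p; have := sp_meets (spP p) s; rewrite e sp_bot; last exact: spP.
  move/esym/negbT/allPn => [x xs nx]; exists (~` x); first exact: map_f.
  by rewrite sp_compl ?nx //; apply: spP.
have [p hp] := ultrafilter_exists fip.
have [a [Pa pa]] := cov p.
have := hp (~` a); rewrite complK => /(_ Pa).
by rewrite sp_compl ?pa //; apply: spP.
Qed.

End Stone.

End Part3.
Import Part3.

Module Part4.
Import Order.Theory GRing.Theory Num.Theory.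
Local Open Scope ring_scope.

Section AtomFam.
Variables (d : Order.disp_t) (A : ctbDistrLatticeType d).
Variable L : seq A.

Definition atI := 'I_(size (atoms L)).
Definition at_ (i : atI) : A := nth \bot%O (atoms L) i.
Definition kk (R : realType) (a : A) (i : atI) : R :=
  if (at_ i `&` a == at_ i)%O then 1 else 0.

Lemma at_in (i : atI) : at_ i \in atoms L.
Proof. exact: mem_nth. Qed.

Lemma at_disj (i j : atI) : i != j -> (at_ i `&` at_ j = \bot)%O.
Proof. exact: atoms_disj. Qed.

Lemma expand (R : realType) (V : lmodType R) (f : A -> V) : additive_on f ->
  forall a, a \in L -> f a = \sum_(i : atI) kk R a i *: f (at_ i).
Proof.
move=> hf a aL; rewrite (decomp hf L a) (big_nth \bot%O) big_mkord.
apply: eq_bigr => i _; rewrite /kk -/(at_ i) meetC.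
case: (atoms_cut aL (at_in i)) => ->; first by rewrite eqxx scale1r.
case: eqP => [<-|_]; first by rewrite scale1r.
by rewrite scale0r (additive0 hf).
Qed.

Definition coef (R : realType) (s : seq (R * A)) (i : atI) : R :=
  \sum_(p <- s) p.1 * kk R p.2 i.

Lemma expand_seq (R : realType) (V : lmodType R) (f : A -> V) : additive_on f ->
  forall s : seq (R * A), (forall p, p \in s -> p.2 \in L) ->
  \sum_(p <- s) p.1 *: f p.2 = \sum_(i : atI) coef s i *: f (at_ i).
Proof.
move=> hf s hs.
rewrite big_seq (eq_bigr (fun p => \sum_(i : atI) (p.1 * kk R p.2 i) *: f (at_ i))).
  rewrite -big_seq exchange_big /=; apply: eq_bigr => i _.
  by rewrite /coef scaler_suml.
move=> p ps; rewrite (expand hf (hs p ps)) scaler_sumr.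
by apply: eq_bigr => i _; rewrite scalerA.
Qed.
End AtomFam.

Section Carat.
Variable R : realType.
Variables (d : Order.disp_t) (A : ctbDistrLatticeType d).
Variables (E : RieszSpace R) (e : E) (chi : A -> E).
Hypothesis hc : caratheodory_space e chi.

Lemma chi_meet a b : chi (a `&` b)%O = rmeet (chi a) (chi b).
Proof. by case: hc => _ _ [_ [h _ _ _]] _; apply: h. Qed.
Lemma chi_join a b : chi (a `|` b)%O = rjoin (chi a) (chi b).
Proof. by case: hc => _ _ [_ [_ h _ _]] _; apply: h. Qed.
Lemma chi_bot : chi \bot%O = 0.
Proof. by case: hc => _ _ [_ [_ _ _ [h _]]] _. Qed.
Lemma chi_top : chi \top%O = e.
Proof. by case: hc => _ _ [_ [_ _ _ [_ h]]] _. Qed.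
Lemma chi_comp a : component e (chi a).
Proof. by case: hc => _ _ [[h _ _] _] _; apply: h. Qed.
Lemma chi_pos a : rle 0 (chi a).
Proof. by case: (chi_comp a). Qed.
Lemma chi_inj a b : chi a = chi b -> a = b.
Proof. by case: hc => _ _ [[_ _ h] _] _; apply: h. Qed.
Lemma chi_surj x : component e x -> exists a, chi a = x.
Proof. by case: hc => _ _ [[_ h _] _] _ /h [a _ <-]; exists a. Qed.
Lemma chi_add : additive_on chi.
Proof.
move=> a b h; rewrite chi_join.
have := rjoin_meet (chi a) (chi b); rewrite -chi_meet h chi_bot addr0 => ->.
by [].
Qed.
Lemma chi_eq0 a : chi a = 0 -> a = \bot%O.
Proof. by rewrite -chi_bot; apply: chi_inj. Qed.

Lemma rep_ex x : exists s : seq (R * A), x = \sum_(p <- s) p.1 *: chi p.2.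
Proof.
case: hc => _ _ _ /(_ x) [s [hs ->]].
elim: s hs => [|q s IH] hs; first by exists [::]; rewrite !big_nil.
have [s' es'] := IH (fun i hi => hs i.+1 hi).
have [a ea] := chi_surj (hs 0%N isT).
by exists ((q.1, a) :: s'); rewrite !big_cons es' /= ea.
Qed.

Definition rep x : seq (R * A) := projT1 (cid (rep_ex x)).
Lemma repE x : x = \sum_(p <- rep x) p.1 *: chi p.2.
Proof. exact: (projT2 (cid (rep_ex x))). Qed.

Lemma atoms_fam_pos L (i : atI L) : rle 0 (chi (at_ i)).
Proof. exact: chi_pos. Qed.
Lemma atoms_fam_disj L (i j : atI L) : i != j -> rmeet (chi (at_ i)) (chi (at_ j)) = 0.
Proof. by move=> h; rewrite -chi_meet at_disj // chi_bot. Qed.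

Section Ext.
Variables (V : lmodType R) (f : A -> V).
Hypothesis hf : additive_on f.

Lemma WD (s : seq (R * A)) : \sum_(p <- s) p.1 *: chi p.2 = 0 ->
  \sum_(p <- s) p.1 *: f p.2 = 0.
Proof.
set L := map snd s.
have hs : forall p, p \in s -> p.2 \in L by move=> p ps; apply: map_f.
rewrite (expand_seq chi_add hs) (expand_seq hf hs) => h0.
apply: big1 => i _.
case: (disj_zero (@atoms_fam_pos L) (@atoms_fam_disj L) h0 i) => [->|h].
  by rewrite scale0r.
by rewrite (chi_eq0 h) (additive0 hf) scaler0.
Qed.

Lemma WD2 (s t : seq (R * A)) :
  \sum_(p <- s) p.1 *: chi p.2 = \sum_(p <- t) p.1 *: chi p.2 ->
  \sum_(p <- s) p.1 *: f p.2 = \sum_(p <- t) p.1 *: f p.2.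
Proof.
move=> h; pose t' := [seq (- p.1, p.2) | p <- t].
have ht' : forall (W : lmodType R) (g : A -> W), \sum_(p <- t') p.1 *: g p.2 = - \sum_(p <- t) p.1 *: g p.2.
  by move=> W g; rewrite big_map -sumrN; apply: eq_bigr => p _; rewrite scaleNr.
have := WD (s := s ++ t'); rewrite !big_cat /= !ht' h subrr => /(_ erefl) /eqP.
by rewrite subr_eq0 => /eqP.
Qed.

Definition linext (x : E) : V := \sum_(p <- rep x) p.1 *: f p.2.

Lemma linext_seq (s : seq (R * A)) :
  linext (\sum_(p <- s) p.1 *: chi p.2) = \sum_(p <- s) p.1 *: f p.2.
Proof. by apply: WD2; rewrite -repE. Qed.

Lemma linext_chi a : linext (chi a) = f a.
Proof.
have := linext_seq [:: (1, a)]; rewrite !big_seq1 /= !scale1r; exact.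
Qed.

Lemma linext_lin : lin linext.
Proof.
move=> k x y.
have ex : k *: x + y = \sum_(p <- [seq (k * p.1, p.2) | p <- rep x] ++ rep y) p.1 *: chi p.2.
  rewrite big_cat big_map /= -repE [x in k *: x]repE scaler_sumr.
  by congr (_ + _); apply: eq_bigr => p _; rewrite scalerA.
rewrite ex linext_seq big_cat big_map /= /linext scaler_sumr.
by congr (_ + _); apply: eq_bigr => p _; rewrite scalerA.
Qed.
End Ext.

Lemma lin_unique (V : lmodType R) (F1 F2 : E -> V) : lin F1 -> lin F2 ->
  (forall a, F1 (chi a) = F2 (chi a)) -> forall x, F1 x = F2 x.
Proof.
move=> h1 h2 h x; rewrite (repE x) (lin_sum h1) (lin_sum h2).
by apply: eq_bigr => p _; rewrite (linZ h1) (linZ h2) h.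
Qed.

End Carat.

End Part4.
Import Part4.

Module Part5.
Import Order.Theory GRing.Theory Num.Theory.
Local Open Scope ring_scope.

Lemma bilin_expand (R : realType) (U V W : lmodType R) (phi : U -> V -> W)
  (h1 : forall y, lin (phi^~ y)) (h2 : forall x, lin (phi x))
  (I J : Type) (s : seq I) (t : seq J) (al : I -> R) (be : J -> R) (X : I -> U) (Y : J -> V) :
  phi (\sum_(i <- s) al i *: X i) (\sum_(j <- t) be j *: Y j) =
  \sum_(i <- s) \sum_(j <- t) (al i * be j) *: phi (X i) (Y j).
Proof.
rewrite (lin_sum (h1 _)); apply: eq_bigr => i _.
rewrite (linZ (h1 _)) (lin_sum (h2 _)) scaler_sumr; apply: eq_bigr => j _.
by rewrite (linZ (h2 _)) scalerA.
Qed.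

Lemma seq_choice (X Y : eqType) (s : seq X) (Rel : X -> Y -> Prop) :
  (forall x, x \in s -> exists y, Rel x y) ->
  exists t : seq (X * Y), map fst t = s /\ forall q, q \in t -> Rel q.1 q.2.
Proof.
elim: s => [|x s IH] h; first by exists [::].
have [y hy] := h x (mem_head _ _).
have [t [ht1 ht2]] := IH (fun x' hx' => h x' (@mem_behead _ (x :: s) _ hx')).
exists ((x, y) :: t); split; first by rewrite /= ht1.
by move=> q; rewrite inE => /orP[/eqP ->|]; [|apply: ht2].
Qed.

Section Main.
Variable R : realType.
Variables (dA dB : Order.disp_t) (A : ctbDistrLatticeType dA) (B : ctbDistrLatticeType dB).
Variables (CA : RieszSpace R) (eA : CA) (chiA : A -> CA).
Hypothesis hA : caratheodory_space eA chiA.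
Variables (CB : RieszSpace R) (eB : CB) (chiB : B -> CB).
Hypothesis hB : caratheodory_space eB chiB.
Variables (CAB : RieszSpace R) (eAB : CAB) (chiAB : (Z12 A B -> Prop) -> CAB).
Hypothesis hAB : caratheodory_space_free_product eAB chiAB.

Local Notation Z := (Z12 A B).
Definition Rect (a : A) (b : B) : Z -> Prop := fun p => stone_hat a p.1 /\ stone_hat b p.2.
Definition clopen := @prod_clopen _ _ A B.
Definition empty : Z -> Prop := fun _ => False.

Lemma predE (U V : Z -> Prop) : (forall p, U p <-> V p) -> U = V.
Proof. by move=> h; apply: funext => p; apply: propext. Qed.

Lemma spA (p : stone_space A) : stone_point (proj1_sig p). Proof. exact: spP. Qed.
Lemma spB (p : stone_space B) : stone_point (proj1_sig p). Proof. exact: spP. Qed.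

Lemma clopen_rect a b : clopen (Rect a b).
Proof.
split.
  by move=> p hp; exists a, b; split; case: hp.
move=> p /= hp.
case: (pselect (stone_hat a p.1)) => ha.
  have hb : ~ stone_hat b p.2 by move=> hb; apply: hp.
  exists \top%O, (~` b)%O; split.
  - by rewrite /stone_hat sp_top //; apply: spA.
  - by rewrite /stone_hat sp_compl ?(negbTE hb) //; [apply/negP|apply: spB].
  - move=> q _; rewrite /stone_hat sp_compl; last exact: spB.
    by move=> /negP nb [_ hb']; apply: nb.
exists (~` a)%O, \top%O; split.
- by rewrite /stone_hat sp_compl; [apply/negP|apply: spA].
- by rewrite /stone_hat sp_top //; apply: spB.
- move=> q; rewrite /stone_hat sp_compl; last exact: spA.
  by move=> /negP na _ [ha' _]; apply: na.
Qed.

Lemma clopen_meet U V : clopen U -> clopen V -> clopen (fun p => U p /\ V p).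
Proof.
move=> [oU oU'] [oV oV']; split.
  move=> p [Up Vp]; have [a [b [ha hb hab]]] := oU p Up.
  have [a' [b' [ha' hb' hab']]] := oV p Vp.
  exists (a `&` a')%O, (b `&` b')%O; split.
  - by rewrite /stone_hat sp_meet ?ha ?ha' //; apply: spA.
  - by rewrite /stone_hat sp_meet ?hb ?hb' //; apply: spB.
  - move=> q; rewrite /stone_hat sp_meet ?sp_meet; [|exact: spB|exact: spA].
    move=> /andP[qa qa'] /andP[qb qb']; split; [apply: hab|apply: hab'] => //.
move=> p /= hp; case: (pselect (U p)) => Up.
  have nV : ~ V p by move=> Vp; apply: hp.
  have [a [b [ha hb hab]]] := oV' p nV.
  by exists a, b; split => // q qa qb [_ Vq]; apply: (hab q qa qb).
have [a [b [ha hb hab]]] := oU' p Up.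
by exists a, b; split => // q qa qb [Uq _]; apply: (hab q qa qb).
Qed.

Lemma chiAB_meet U V : clopen U -> clopen V ->
  chiAB (fun p => U p /\ V p) = rmeet (chiAB U) (chiAB V).
Proof. by case: hAB => _ _ [_ [h _ _ _]] _; apply: h. Qed.
Lemma chiAB_join U V : clopen U -> clopen V ->
  chiAB (fun p => U p \/ V p) = rjoin (chiAB U) (chiAB V).
Proof. by case: hAB => _ _ [_ [_ h _ _]] _; apply: h. Qed.
Lemma chiAB_empty : chiAB empty = 0.
Proof. by case: hAB => _ _ [_ [_ _ _ [h _]]] _. Qed.
Lemma chiAB_comp U : clopen U -> component eAB (chiAB U).
Proof. by case: hAB => _ _ [[h _ _] _] _; apply: h. Qed.
Lemma chiAB_pos U : clopen U -> rle 0 (chiAB U).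
Proof. by move=> /chiAB_comp []. Qed.
Lemma chiAB_inj U V : clopen U -> clopen V -> chiAB U = chiAB V -> U = V.
Proof. by case: hAB => _ _ [[_ _ h] _] _; apply: h. Qed.
Lemma chiAB_surj x : component eAB x -> exists2 U, clopen U & chiAB U = x.
Proof. by case: hAB => _ _ [[_ h _] _] _; apply: h. Qed.

Lemma clopen_empty : clopen empty.
Proof.
split; first by move=> p [].
move=> p _; exists \top%O, \top%O; split; last by move=> q _ _ [].
  by rewrite /stone_hat sp_top //; apply: spA.
by rewrite /stone_hat sp_top //; apply: spB.
Qed.

Lemma chiAB_add U V : clopen U -> clopen V -> (forall p, ~ (U p /\ V p)) ->
  chiAB (fun p => U p \/ V p) = chiAB U + chiAB V.
Proof.
move=> cU cV h; rewrite chiAB_join //.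
have := rjoin_meet (chiAB U) (chiAB V); rewrite -chiAB_meet //.
have -> : (fun p => U p /\ V p) = empty by apply: predE => p; split => // /h.
by rewrite chiAB_empty addr0.
Qed.

Lemma chiAB_eq0 U : clopen U -> chiAB U = 0 -> U = empty.
Proof. by move=> cU h; apply: chiAB_inj => //; [exact: clopen_empty|rewrite chiAB_empty]. Qed.

Lemma Rect_meet a b a' b' :
  (fun p => Rect a b p /\ Rect a' b' p) = Rect (a `&` a')%O (b `&` b')%O.
Proof.
apply: predE => p; rewrite /Rect /stone_hat sp_meet ?sp_meet; [|exact: spB|exact: spA].
by split => [[[h1 h2] [h3 h4]]|[/andP[h1 h3] /andP[h2 h4]]]; rewrite ?h1 ?h2 ?h3 ?h4.
Qed.

Lemma Rect_botl b : Rect \bot%O b = empty.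
Proof. by apply: predE => p; rewrite /Rect /stone_hat (sp_bot (spA p.1)); split => -[]. Qed.
Lemma Rect_botr a : Rect a \bot%O = empty.
Proof.
by apply: predE => p; rewrite /Rect /stone_hat (sp_bot (spB p.2)); split => -[].
Qed.

Definition chiR a b := chiAB (Rect a b).

Lemma chiR_botl b : chiR \bot%O b = 0.
Proof. by rewrite /chiR Rect_botl chiAB_empty. Qed.
Lemma chiR_botr a : chiR a \bot%O = 0.
Proof. by rewrite /chiR Rect_botr chiAB_empty. Qed.
Lemma chiR_pos a b : rle 0 (chiR a b).
Proof. exact/chiAB_pos/clopen_rect. Qed.
Lemma chiR_meet a b a' b' : rmeet (chiR a b) (chiR a' b') = chiR (a `&` a')%O (b `&` b')%O.
Proof. by rewrite /chiR -chiAB_meet ?Rect_meet //; apply: clopen_rect. Qed.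

Lemma chiR_addl b : additive_on (fun a => chiR a b).
Proof.
move=> a a' h; rewrite /chiR -chiAB_add; try exact: clopen_rect.
  congr chiAB; apply: predE => p; rewrite /Rect /stone_hat sp_join; last exact: spA.
  by split => [[/orP[]]|[]] ; [left|right|move=> [-> ->]|move=> [-> ->]]; rewrite ?orbT.
move=> p; rewrite -[Rect a b p /\ _]/((fun p => Rect a b p /\ Rect a' b p) p) Rect_meet h.
by rewrite Rect_botl.
Qed.

Lemma chiR_addr a : additive_on (fun b => chiR a b).
Proof.
move=> b b' h; rewrite /chiR -chiAB_add; try exact: clopen_rect.
  congr chiAB; apply: predE => p; rewrite /Rect /stone_hat sp_join; last exact: spB.
  by split => [[-> /orP[]]|[]] ; [left|right|move=> [-> ->]|move=> [-> ->]]; rewrite ?orbT.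
move=> p; rewrite -[Rect a b p /\ _]/((fun p => Rect a b p /\ Rect a b' p) p) Rect_meet h.
by rewrite Rect_botr.
Qed.


Lemma lin_add (U V : lmodType R) (F1 F2 : U -> V) : lin F1 -> lin F2 ->
  lin (fun x => F1 x + F2 x).
Proof.
move=> h1 h2 k x y; rewrite h1 h2 scalerDr.
by rewrite -!addrA; congr (_ + _); rewrite addrCA.
Qed.

Definition Psi (a : A) : CB -> CAB := linext hB (fun b => chiR a b).
Lemma Psi_lin a : lin (Psi a). Proof. exact: linext_lin (chiR_addr a). Qed.
Lemma Psi_chi a b : Psi a (chiB b) = chiR a b. Proof. exact: linext_chi (chiR_addr a) b. Qed.

Lemma Psi_add y : additive_on (fun a => Psi a y).
Proof.
move=> a a' h /=.
apply: (lin_unique hB (Psi_lin _) (lin_add (Psi_lin a) (Psi_lin a'))) => b.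
by rewrite !Psi_chi chiR_addl.
Qed.

Definition psi (x : CA) (y : CB) : CAB := linext hA (fun a => Psi a y) x.
Lemma psi_lin1 y : lin (psi^~ y). Proof. exact: linext_lin (Psi_add y). Qed.
Lemma psi_chi a y : psi (chiA a) y = Psi a y. Proof. exact: linext_chi (Psi_add y) a. Qed.
Lemma psi_lin2 x : lin (psi x).
Proof.
move=> k y y'; rewrite /psi /linext scaler_sumr -big_split /=.
apply: eq_bigr => p _; rewrite Psi_lin scalerDr !scalerA.
by rewrite mulrC.
Qed.
Lemma psi_chichi a b : psi (chiA a) (chiB b) = chiR a b.
Proof. by rewrite psi_chi Psi_chi. Qed.

Section Grid.
Variables (LA : seq A) (LB : seq B).
Definition GI := (atI LA * atI LB)%type.
Definition gR (p : GI) : CAB := chiR (at_ p.1) (at_ p.2).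

Lemma gR_pos p : rle 0 (gR p). Proof. exact: chiR_pos. Qed.
Lemma gR_disj p q : p != q -> rmeet (gR p) (gR q) = 0.
Proof.
move=> npq; rewrite /gR chiR_meet.
have [e1|n1] := eqVneq p.1 q.1.
  have n2 : p.2 != q.2.
    apply: contra npq => /eqP e2; apply/eqP.
    by move: e1 e2; case: p => ? ?; case: q => ? ? /= -> ->.
  by rewrite (at_disj n2) chiR_botr.
by rewrite (at_disj n1) chiR_botl.
Qed.

Lemma bilin_grid (V : lmodType R) (phi : CA -> CB -> V)
  (h1 : forall y, lin (phi^~ y)) (h2 : forall x, lin (phi x))
  (sx : seq (R * A)) (sy : seq (R * B)) :
  (forall p, p \in sx -> p.2 \in LA) -> (forall p, p \in sy -> p.2 \in LB) ->
  phi (\sum_(p <- sx) p.1 *: chiA p.2) (\sum_(q <- sy) q.1 *: chiB q.2) =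
  \sum_(p : GI) (coef sx p.1 * coef sy p.2) *: phi (chiA (at_ p.1)) (chiB (at_ p.2)).
Proof.
move=> hx hy.
rewrite (expand_seq (chi_add hA) hx) (expand_seq (chi_add hB) hy).
rewrite (bilin_expand h1 h2) pair_bigA /=.
by [].
Qed.

Lemma psi_grid (sx : seq (R * A)) (sy : seq (R * B)) :
  (forall p, p \in sx -> p.2 \in LA) -> (forall p, p \in sy -> p.2 \in LB) ->
  psi (\sum_(p <- sx) p.1 *: chiA p.2) (\sum_(q <- sy) q.1 *: chiB q.2) =
  \sum_(p : GI) (coef sx p.1 * coef sy p.2) *: gR p.
Proof.
move=> hx hy; rewrite (bilin_grid psi_lin1 psi_lin2 hx hy).
by apply: eq_bigr => p _; rewrite psi_chichi.
Qed.
Lemma psi_fin (al : atI LA -> R) (be : atI LB -> R) :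
  psi (\sum_i al i *: chiA (at_ i)) (\sum_j be j *: chiB (at_ j)) =
  \sum_(p : GI) (al p.1 * be p.2) *: gR p.
Proof.
rewrite (bilin_expand psi_lin1 psi_lin2) pair_bigA /=.
by apply: eq_bigr => p _; rewrite psi_chichi.
Qed.
End Grid.

Lemma psi_riesz1 x : rle 0 x -> riesz_hom (psi x).
Proof.
move=> hx; split; first exact: psi_lin2.
move=> y y'.
set sx := rep hA x; set sy := rep hB y; set sy' := rep hB y'.
set LA := map snd sx; set LB := map snd (sy ++ sy').
have hsx : forall p, p \in sx -> p.2 \in LA by move=> p ps; apply: map_f.
have hsy : forall p, p \in sy -> p.2 \in LB.
  by move=> p ps; apply: map_f; rewrite mem_cat ps.
have hsy' : forall p, p \in sy' -> p.2 \in LB.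
  by move=> p ps; apply: map_f; rewrite mem_cat ps orbT.
have ex : x = \sum_(i : atI LA) coef sx i *: chiA (at_ i).
  by rewrite {1}(repE hA x) (expand_seq (chi_add hA) hsx).
have ey : y = \sum_(j : atI LB) coef sy j *: chiB (at_ j).
  by rewrite {1}(repE hB y) (expand_seq (chi_add hB) hsy).
have ey' : y' = \sum_(j : atI LB) coef sy' j *: chiB (at_ j).
  by rewrite {1}(repE hB y') (expand_seq (chi_add hB) hsy').
have hx' : rle 0 (\sum_(i : atI LA) coef sx i *: chiA (at_ i)) by rewrite -ex.
have posx := @disj_pos _ _ _ (fun i => chiA (at_ i)) (@atoms_fam_pos _ _ _ _ _ _ hA LA)
  (@atoms_fam_disj _ _ _ _ _ _ hA LA) _ hx'.
have jy : rjoin y y' = \sum_(j : atI LB) Num.max (coef sy j) (coef sy' j) *: chiB (at_ j).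
  by rewrite ey ey'; apply: (@disj_join _ _ _ (fun j => chiB (at_ j)) (@atoms_fam_pos _ _ _ _ _ _ hB LB)
    (@atoms_fam_disj _ _ _ _ _ _ hB LB)).
have ep : forall be : atI LB -> R, psi x (\sum_j be j *: chiB (at_ j)) =
    \sum_(p : GI LA LB) (coef sx p.1 * be p.2) *: gR p.
  by move=> be; rewrite {1}ex psi_fin.
rewrite jy ey ey' !ep (disj_join (@gR_pos LA LB) (@gR_disj LA LB)).
apply: eq_bigr => p _.
case: (posx p.1) => [h|h]; first by rewrite maxr_pMr.
by rewrite /gR (chi_eq0 hA h) chiR_botl !scaler0.
Qed.

Lemma psi_riesz2 y : rle 0 y -> riesz_hom (psi^~ y).
Proof.
move=> hy; split; first exact: psi_lin1.
move=> x x'.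
set sx := rep hA x; set sx' := rep hA x'; set sy := rep hB y.
set LA := map snd (sx ++ sx'); set LB := map snd sy.
have hsy : forall p, p \in sy -> p.2 \in LB by move=> p ps; apply: map_f.
have hsx : forall p, p \in sx -> p.2 \in LA.
  by move=> p ps; apply: map_f; rewrite mem_cat ps.
have hsx' : forall p, p \in sx' -> p.2 \in LA.
  by move=> p ps; apply: map_f; rewrite mem_cat ps orbT.
have ey : y = \sum_(j : atI LB) coef sy j *: chiB (at_ j).
  by rewrite {1}(repE hB y) (expand_seq (chi_add hB) hsy).
have ex : x = \sum_(j : atI LA) coef sx j *: chiA (at_ j).
  by rewrite {1}(repE hA x) (expand_seq (chi_add hA) hsx).
have ex' : x' = \sum_(j : atI LA) coef sx' j *: chiA (at_ j).
  by rewrite {1}(repE hA x') (expand_seq (chi_add hA) hsx').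
have hy' : rle 0 (\sum_(i : atI LB) coef sy i *: chiB (at_ i)) by rewrite -ey.
have posy := @disj_pos _ _ _ (fun i => chiB (at_ i)) (@atoms_fam_pos _ _ _ _ _ _ hB LB)
  (@atoms_fam_disj _ _ _ _ _ _ hB LB) _ hy'.
have jx : rjoin x x' = \sum_(j : atI LA) Num.max (coef sx j) (coef sx' j) *: chiA (at_ j).
  by rewrite ex ex'; apply: (@disj_join _ _ _ (fun j => chiA (at_ j)) (@atoms_fam_pos _ _ _ _ _ _ hA LA)
    (@atoms_fam_disj _ _ _ _ _ _ hA LA)).
have ep : forall al : atI LA -> R, psi (\sum_j al j *: chiA (at_ j)) y =
    \sum_(p : GI LA LB) (al p.1 * coef sy p.2) *: gR p.
  by move=> al; rewrite [in LHS]ey psi_fin.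
rewrite /= jx ex ex' !ep (disj_join (@gR_pos LA LB) (@gR_disj LA LB)).
apply: eq_bigr => p _.
case: (posy p.2) => [h|h]; first by rewrite maxr_pMl.
by rewrite /gR (chi_eq0 hB h) chiR_botr !scaler0.
Qed.

Lemma psi_bimorphism : riesz_bimorphism psi.
Proof.
split; [exact: psi_lin2|exact: psi_lin1|exact: psi_riesz1|exact: psi_riesz2].
Qed.

Lemma Z_compact (P : A -> B -> Prop) :
  (forall p : Z, exists a b, P a b /\ Rect a b p) ->
  exists cov : seq (A * B), (forall q, q \in cov -> P q.1 q.2) /\
    forall p : Z, exists2 q, q \in cov & Rect q.1 q.2 p.
Proof.
move=> hcov.
have step1 : forall z1 : stone_space A, exists a,
    (exists cov1 : seq (A * B), (forall q, q \in cov1 -> P q.1 q.2) /\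
       forall p : Z, stone_hat a p.1 -> exists2 q, q \in cov1 & Rect q.1 q.2 p)
    /\ proj1_sig z1 a.
  move=> z1.
  have hb : forall z2 : stone_space B, exists b,
      (exists a, P a b /\ stone_hat a z1) /\ proj1_sig z2 b.
    move=> z2; have [a [b [Pab [ha hb]]]] := hcov (z1, z2).
    by exists b; split => //; exists a.
  have [sb [sbQ sbcov]] := stone_compact hb.
  have [t [ht1 ht2]] := seq_choice (Rel := fun b a => P a b /\ stone_hat a z1) sbQ.
  have allt : forall z : stone_space A, proj1_sig z (\meet_(q <- t) q.2)%O =
      all (proj1_sig z) (map snd t).
    by move=> z; rewrite -(sp_meets (spA z)) big_map.
  exists (\meet_(q <- t) q.2)%O; split; last first.
    rewrite allt; apply/allP => a /mapP[q qt ->].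
    by case: (ht2 q qt).
  exists [seq (q.2, q.1) | q <- t]; split.
    by move=> q /mapP[q' q't ->] /=; case: (ht2 q' q't).
  move=> p hp; have [b bsb pb] := sbcov p.2.
  move: bsb; rewrite -ht1 => /mapP[q qt eb].
  exists (q.2, q.1); first exact: (map_f (fun q => (q.2, q.1)) qt).
  split => //=; last by rewrite /stone_hat -eb.
  move: hp; rewrite /stone_hat allt => /allP; apply.
  exact: map_f.
have [sa [saQ sacov]] := stone_compact step1.
have [t2 [ht1 ht2]] := seq_choice (Rel := fun a (c : seq (A * B)) =>
    (forall q, q \in c -> P q.1 q.2) /\
    forall p : Z, stone_hat a p.1 -> exists2 q, q \in c & Rect q.1 q.2 p) saQ.
exists (flatten (map snd t2)); split.
  move=> q /flattenP[c /mapP[ac act ->]] qc.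
  by case: (ht2 ac act) => h _; apply: h.
move=> p; have [a asa pa] := sacov p.1.
move: asa; rewrite -ht1 => /mapP[ac act ea].
case: (ht2 ac act) => _ /(_ p); rewrite -ea => /(_ pa) [q qc rq].
exists q => //; apply/flattenP; exists ac.2 => //; exact: map_f.
Qed.

Lemma clopen_cover U : clopen U -> exists cov : seq (A * B),
  (forall q, q \in cov -> (forall p, Rect q.1 q.2 p -> U p) \/ (forall p, Rect q.1 q.2 p -> ~ U p))
  /\ forall p : Z, exists2 q, q \in cov & Rect q.1 q.2 p.
Proof.
move=> [oU oU']; apply: (@Z_compact (fun a b => (forall p, Rect a b p -> U p) \/ (forall p, Rect a b p -> ~ U p))) => p.
case: (pselect (U p)) => h.
  have [a [b [ha hb hab]]] := oU p h.
  exists a, b; split; last by split.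
  by left => q [qa qb]; apply: hab.
have [a [b [ha hb hab]]] := oU' p h.
exists a, b; split; last by split.
by right => q [qa qb]; apply: hab.
Qed.

Lemma cut_addl V b : clopen V -> additive_on (fun a => chiAB (fun p => V p /\ Rect a b p)).
Proof.
move=> cV a a' h /=; rewrite -chiAB_add; try by apply: clopen_meet => //; apply: clopen_rect.
  congr chiAB; apply: predE => p; rewrite /Rect /stone_hat sp_join; last exact: spA.
  split; first by move=> [vp [/orP[] ha hb]]; [left|right].
  by move=> [[vp [ha hb]]|[vp [ha hb]]]; rewrite ha ?orbT.
move=> p [[_ r1] [_ r2]].
have e := Rect_meet a b a' b; rewrite h Rect_botl in e.
have ep := f_equal (fun P => P p) e; simpl in ep.
by have : empty p by rewrite -ep; split.
Qed.

Lemma cut_addr V a : clopen V -> additive_on (fun b => chiAB (fun p => V p /\ Rect a b p)).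
Proof.
move=> cV b b' h /=; rewrite -chiAB_add; try by apply: clopen_meet => //; apply: clopen_rect.
  congr chiAB; apply: predE => p; rewrite /Rect /stone_hat sp_join; last exact: spB.
  split; first by move=> [vp [ha /orP[] hb]]; [left|right].
  by move=> [[vp [ha hb]]|[vp [ha hb]]]; rewrite hb ?orbT.
move=> p [[_ r1] [_ r2]].
have e := Rect_meet a b a b'; rewrite h Rect_botr in e.
have ep := f_equal (fun P => P p) e; simpl in ep.
by have : empty p by rewrite -ep; split.
Qed.

Definition gv (V : lmodType R) (phi : A -> B -> V) (s : seq (R * (A * B))) : V :=
  \sum_(q <- s) q.1 *: phi q.2.1 q.2.2.

Lemma gv_cat (V : lmodType R) (phi : A -> B -> V) s t : gv phi (s ++ t) = gv phi s + gv phi t.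
Proof. by rewrite /gv big_cat. Qed.

Lemma gv_scale (V : lmodType R) (phi : A -> B -> V) k s :
  gv phi [seq (k * q.1, q.2) | q <- s] = k *: gv phi s.
Proof.
by rewrite /gv big_map scaler_sumr; apply: eq_bigr => q _; rewrite scalerA.
Qed.

Lemma clopen_grid U : clopen U -> exists s, chiAB U = gv chiR s.
Proof.
move=> cU; have [cov [hcov1 hcov2]] := clopen_cover cU.
set LA := map fst cov; set LB := map snd cov.
have e1 : chiAB U = \sum_(i : atI LA) \sum_(j : atI LB) chiAB (fun z => U z /\ Rect (at_ i) (at_ j) z).
  have eU : U = (fun z => U z /\ Rect \top%O \top%O z).
    apply: predE => z; rewrite /Rect /stone_hat (sp_top (spA z.1)) (sp_top (spB z.2)).
    by split => [h|[h _]].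
  rewrite {1}eU.
  rewrite (decomp (cut_addl \top%O cU) LA \top%O) (big_nth \bot%O) big_mkord.
  apply: eq_bigr => i _; rewrite meet1x.
  rewrite (decomp (cut_addr (at_ i) cU) LB \top%O) (big_nth \bot%O) big_mkord.
  by apply: eq_bigr => j _; rewrite meet1x.
pose k (p : GI LA LB) : R :=
  if pselect (exists z, U z /\ Rect (at_ p.1) (at_ p.2) z) then 1 else 0.
exists [seq (k p, (at_ p.1, at_ p.2)) | p <- index_enum (GI LA LB)].
rewrite e1 pair_bigA /gv big_map; apply: eq_bigr => p _ /=.
rewrite /k; case: pselect => [[z0 [Uz0 Rz0]]|nz].
  rewrite scale1r; congr chiAB; apply: predE => z; split => [[]//|Rz]; split => //.
  have [q qc Rq] := hcov2 z0.
  case: (hcov1 q qc) => hq; last by exfalso; apply: (hq z0).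
  apply: hq.
  have c1 : (at_ p.1 `&` q.1 = at_ p.1)%O.
    case: (atoms_cut (map_f fst qc) (at_in p.1)) => // e.
    have := sp_meet (spA z0.1) (at_ p.1) q.1; rewrite e (sp_bot (spA z0.1)).
    by case: Rz0 => -> _; case: Rq => -> _.
  have c2 : (at_ p.2 `&` q.2 = at_ p.2)%O.
    case: (atoms_cut (map_f snd qc) (at_in p.2)) => // e.
    have := sp_meet (spB z0.2) (at_ p.2) q.2; rewrite e (sp_bot (spB z0.2)).
    by case: Rz0 => _ ->; case: Rq => _ ->.
  case: Rz => h1 h2; split.
    by move: h1; rewrite /stone_hat -c1 (sp_meet (spA z.1)) => /andP[].
  by move: h2; rewrite /stone_hat -c2 (sp_meet (spB z.2)) => /andP[].
rewrite scale0r -chiAB_empty; congr chiAB; apply: predE => z; split => //.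
by move=> h; apply: nz; exists z.
Qed.

Lemma grid_ex w : exists s, w = gv chiR s.
Proof.
case: hAB => _ _ _ /(_ w) [s [hs ->]].
elim: s hs => [|q s IH] hs; first by exists [::]; rewrite big_nil /gv big_nil.
have [s' es'] := IH (fun i hi => hs i.+1 hi).
have [U cU eU] := chiAB_surj (hs 0%N isT).
have [sU eU'] := clopen_grid cU.
exists ([seq (q.1 * r.1, r.2) | r <- sU] ++ s').
by rewrite big_cons es' gv_cat gv_scale /= -eU' eU.
Qed.

Lemma bim_disj1 (E1 E2 H : RieszSpace R) (phi : E1 -> E2 -> H) : riesz_bimorphism phi ->
  forall u u' v v', rle 0 u -> rle 0 u' -> rle 0 v -> rle 0 v' -> rmeet u u' = 0 ->
  rmeet (phi u v) (phi u' v') = 0.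
Proof.
move=> [l2 l1 r1 r2] u u' v v' hu hu' hv hv' huu.
set w := v + v'.
have hw : rle 0 w by apply: rle_pos_add.
apply: rle_anti; last by apply: rmeet_pos; [exact: (rh_pos (r1 _ hu) hv)|exact: (rh_pos (r1 _ hu') hv')].
have -> : 0 = rmeet (phi u w) (phi u' w).
  have := rh_meet (r2 w hw) u u'; rewrite /= huu (lin0 (l1 w)) => <-.
  by [].
apply: rmeet_le.
  by rewrite /w (linD (l2 u)); apply: rle_addpos; exact: (rh_pos (r1 _ hu) hv').
by rewrite /w (linD (l2 u')) addrC; apply: rle_addpos; exact: (rh_pos (r1 _ hu') hv).
Qed.

Lemma bim_disj2 (E1 E2 H : RieszSpace R) (phi : E1 -> E2 -> H) : riesz_bimorphism phi ->
  forall u u' v v', rle 0 u -> rle 0 u' -> rle 0 v -> rle 0 v' -> rmeet v v' = 0 ->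
  rmeet (phi u v) (phi u' v') = 0.
Proof.
move=> [l2 l1 r1 r2] u u' v v' hu hu' hv hv' hvv.
have bim' : riesz_bimorphism (fun y x => phi x y) by split.
exact: (bim_disj1 bim' hv hv' hu hu' hvv).
Qed.

Variables (G : RieszSpace R) (tp : CA -> CB -> G).
Hypothesis hG : fremlin_tensor_product tp.

Lemma tp_bim : riesz_bimorphism tp. Proof. by case: hG. Qed.
Lemma tp_lin2 x : lin (tp x). Proof. by case: tp_bim => h _ _ _; apply: h. Qed.
Lemma tp_lin1 y : lin (tp^~ y). Proof. by case: tp_bim => _ h _ _; apply: h. Qed.

Definition tpf a b := tp (chiA a) (chiB b).

Section Grid2.
Variables (LA : seq A) (LB : seq B).
Definition C3 (s : seq (R * (A * B))) (p : GI LA LB) : R :=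
  \sum_(q <- s) q.1 * (kk R q.2.1 p.1 * kk R q.2.2 p.2).

Lemma gv_expand (V : lmodType R) (phi : CA -> CB -> V)
  (h1 : forall y, lin (phi^~ y)) (h2 : forall x, lin (phi x)) s :
  (forall q, q \in s -> q.2.1 \in LA) -> (forall q, q \in s -> q.2.2 \in LB) ->
  gv (fun a b => phi (chiA a) (chiB b)) s =
  \sum_(p : GI LA LB) C3 s p *: phi (chiA (at_ p.1)) (chiB (at_ p.2)).
Proof.
move=> hsA hsB; rewrite /gv big_seq.
rewrite (eq_bigr (fun q => \sum_(p : GI LA LB) (q.1 * (kk R q.2.1 p.1 * kk R q.2.2 p.2)) *:
    phi (chiA (at_ p.1)) (chiB (at_ p.2)))); last first.
  move=> q qs.
  rewrite (expand (chi_add hA) (hsA q qs)) (expand (chi_add hB) (hsB q qs)).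
  rewrite (bilin_expand h1 h2) pair_bigA scaler_sumr; apply: eq_bigr => p _.
  by rewrite scalerA.
rewrite -big_seq exchange_big /=; apply: eq_bigr => p _.
by rewrite /C3 scaler_suml.
Qed.

Definition gT (p : GI LA LB) : G := tp (chiA (at_ p.1)) (chiB (at_ p.2)).
Lemma gT_pos p : rle 0 (gT p).
Proof. by case: tp_bim => _ _ r1 _; exact: (rh_pos (r1 _ (chi_pos hA _)) (chi_pos hB _)). Qed.
Lemma gT_disj p q : p != q -> rmeet (gT p) (gT q) = 0.
Proof.
move=> npq; have [e1|n1] := eqVneq p.1 q.1.
  have n2 : p.2 != q.2.
    apply: contra npq => /eqP e2; apply/eqP.
    by move: e1 e2; case: p => ? ?; case: q => ? ? /= -> ->.
  apply: (bim_disj2 tp_bim); try exact: (chi_pos hA); try exact: (chi_pos hB).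
  exact: (atoms_fam_disj hB n2).
apply: (bim_disj1 tp_bim); try exact: (chi_pos hA); try exact: (chi_pos hB).
exact: (atoms_fam_disj hA n1).
Qed.

Lemma gvR_expand s : (forall q, q \in s -> q.2.1 \in LA) -> (forall q, q \in s -> q.2.2 \in LB) ->
  gv chiR s = \sum_(p : GI LA LB) C3 s p *: gR p.
Proof.
move=> hsA hsB.
have -> : gv chiR s = gv (fun a b => psi (chiA a) (chiB b)) s.
  by apply: eq_bigr => q _; rewrite psi_chichi.
rewrite (gv_expand psi_lin1 psi_lin2 hsA hsB); apply: eq_bigr => p _.
by rewrite psi_chichi.
Qed.

Lemma gvT_expand s : (forall q, q \in s -> q.2.1 \in LA) -> (forall q, q \in s -> q.2.2 \in LB) ->
  gv tpf s = \sum_(p : GI LA LB) C3 s p *: gT p.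
Proof. by move=> hsA hsB; rewrite (gv_expand tp_lin1 tp_lin2 hsA hsB). Qed.
End Grid2.

Lemma WD3 s : gv chiR s = 0 -> gv tpf s = 0.
Proof.
set LA := map (fun q => q.2.1) s; set LB := map (fun q => q.2.2) s.
have hsA : forall q, q \in s -> q.2.1 \in LA by move=> q qs; apply: (map_f (fun q => q.2.1)).
have hsB : forall q, q \in s -> q.2.2 \in LB by move=> q qs; apply: (map_f (fun q => q.2.2)).
rewrite (gvR_expand hsA hsB) (gvT_expand hsA hsB) => h0.
apply: big1 => p _.
case: (disj_zero (@gR_pos LA LB) (@gR_disj LA LB) h0 p) => [->|h]; first by rewrite scale0r.
have hE := chiAB_eq0 (clopen_rect _ _) h.
have [e1|n1] := eqVneq (at_ p.1) \bot%O.
  by rewrite /gT e1 (chi_bot hA) (lin0 (tp_lin1 _)) scaler0.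
have [e2|n2] := eqVneq (at_ p.2) \bot%O.
  by rewrite /gT e2 (chi_bot hB) (lin0 (tp_lin2 _)) scaler0.
exfalso.
have [z1 h1] := stone_point_exists n1; have [z2 h2] := stone_point_exists n2.
have := f_equal (fun P => P (z1, z2)) hE; rewrite /Rect /empty /= => ep.
by have : False by rewrite -ep; split.
Qed.

Lemma WD3' s t : gv chiR s = gv chiR t -> gv tpf s = gv tpf t.
Proof.
move=> h; have := @WD3 (s ++ [seq (-1 * q.1, q.2) | q <- t]).
rewrite !gv_cat !gv_scale h !scaleN1r subrr => /(_ erefl) /eqP.
by rewrite subr_eq0 => /eqP.
Qed.

Definition grid w := projT1 (cid (grid_ex w)).
Lemma gridE w : w = gv chiR (grid w).
Proof. exact: (projT2 (cid (grid_ex w))). Qed.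

Definition M w := gv tpf (grid w).
Lemma M_gv s : M (gv chiR s) = gv tpf s.
Proof. by apply: WD3'; rewrite -gridE. Qed.

Lemma M_lin : lin M.
Proof.
move=> k w w'.
have e : k *: w + w' = gv chiR ([seq (k * q.1, q.2) | q <- grid w] ++ grid w').
  by rewrite gv_cat gv_scale -!gridE.
by rewrite e M_gv gv_cat gv_scale.
Qed.

Lemma M_join w w' : M (rjoin w w') = rjoin (M w) (M w').
Proof.
set s := grid w; set s' := grid w'.
set LA := map (fun q => q.2.1) (s ++ s'); set LB := map (fun q => q.2.2) (s ++ s').
have hA1 : forall q, q \in s -> q.2.1 \in LA.
  by move=> q qs; apply: (map_f (fun q => q.2.1)); rewrite mem_cat qs.
have hA2 : forall q, q \in s' -> q.2.1 \in LA.
  by move=> q qs; apply: (map_f (fun q => q.2.1)); rewrite mem_cat qs orbT.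
have hB1 : forall q, q \in s -> q.2.2 \in LB.
  by move=> q qs; apply: (map_f (fun q => q.2.2)); rewrite mem_cat qs.
have hB2 : forall q, q \in s' -> q.2.2 \in LB.
  by move=> q qs; apply: (map_f (fun q => q.2.2)); rewrite mem_cat qs orbT.
set s'' := [seq (Num.max (C3 s p) (C3 s' p), (at_ p.1, at_ p.2)) | p <- index_enum (GI LA LB)].
have ej : rjoin w w' = gv chiR s''.
  rewrite {1}(gridE w) {1}(gridE w') (gvR_expand hA1 hB1) (gvR_expand hA2 hB2).
  by rewrite (disj_join (@gR_pos LA LB) (@gR_disj LA LB)) /gv big_map.
rewrite ej M_gv /M (gvT_expand hA1 hB1) (gvT_expand hA2 hB2).
by rewrite (disj_join (@gT_pos LA LB) (@gT_disj LA LB)) /gv big_map.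
Qed.

Lemma M_rh : riesz_hom M.
Proof. by split; [exact: M_lin|exact: M_join]. Qed.

Lemma M_psi x y : M (psi x y) = tp x y.
Proof.
set s3 := [seq (p.1 * q.1, (p.2, q.2)) | p <- rep hA x, q <- rep hB y].
have e1 : psi x y = gv chiR s3.
  rewrite {1}(repE hA x) {1}(repE hB y) (bilin_expand psi_lin1 psi_lin2) /gv big_allpairs_dep.
  by apply: eq_bigr => p _; apply: eq_bigr => q _; rewrite psi_chichi.
have e2 : tp x y = gv tpf s3.
  rewrite {1}(repE hA x) {1}(repE hB y) (bilin_expand tp_lin1 tp_lin2) /gv big_allpairs_dep.
  by [].
by rewrite e1 M_gv e2.
Qed.

Lemma main_iso : exists T : G -> CAB, riesz_iso T.
Proof.
case: hG => archG bimG univ.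
have archAB : archimedean CAB by case: hAB.
have [T [[hT hTtp] _]] := univ CAB psi archAB psi_bimorphism.
exists T; split => //.
exists M.
  move=> g.
  have hMT : riesz_hom (M \o T) /\ (forall x y, (M \o T) (tp x y) = tp x y).
    split; first exact: rh_comp hT M_rh.
    by move=> x y /=; rewrite hTtp M_psi.
  have hid : riesz_hom (@id G) /\ (forall x y, id (tp x y) = tp x y).
    by split; [exact: rh_id|].
  have [T0 [_ uniq]] := univ G tp archG bimG.
  have e1 := uniq _ hMT; have e2 := uniq _ hid.
  by have := f_equal (fun f => f g) (etrans (esym e1) e2).
move=> w; rewrite /M [RHS](gridE w) /gv (lin_sum (rh_lin hT)).
by apply: eq_bigr => q _; rewrite (linZ (rh_lin hT)) /tpf hTtp psi_chichi.
Qed.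

End Main.

End Part5.
Import Part5.

Unset Implicit Arguments.

Theorem theorem2p1 (R : realType)
    (dA dB : Order.disp_t) (A : ctbDistrLatticeType dA) (B : ctbDistrLatticeType dB)
    (CA : RieszSpace R) (eA : CA) (chiA : A -> CA)
    (hA : caratheodory_space eA chiA)
    (CB : RieszSpace R) (eB : CB) (chiB : B -> CB)
    (hB : caratheodory_space eB chiB)
    (CAB : RieszSpace R) (eAB : CAB) (chiAB : (Z12 A B -> Prop) -> CAB)
    (hAB : caratheodory_space_free_product eAB chiAB)
    (G : RieszSpace R) (tp : CA -> CB -> G)
    (hG : fremlin_tensor_product tp) :
  exists T : G -> CAB, riesz_iso T.
Proof.
exact: (main_iso hA hB hAB hG).
Qed.
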